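(* Let $\mathcal{C}(\mathbb{R}) = \{A\subseteq\mathbb{R} : A \text{ is countable or } \mathbb{R}\setminus A \text{ is countable}\}$. Then $\mathcal{C}(\mathbb{R}) \neq \mathcal{B}_f(\mathbb{R})$ for every two-point selection $f$ on $\mathbb{R}$.
   Context: A two-point selection on $\mathbb{R}$ is a function $f$ from the set of two-element subsets of $\mathbb{R}$ to $\mathbb{R}$ with $f(F)\in F$. Write $r<_f s$ if $f(\{r,s\})=r$ ($r\ne s$), $(\leftarrow,r)_f=\{x: x<_f r\}$, $(r,\rightarrow)_f=\{x: r<_f x\}$. The topology $\tau_f$ on $\mathbb{R}$ is generated (as a subbase) by all sets $(\leftarrow,r)_f$, $(r,\rightarrow)_f$, $r\in\mathbb{R}$, and $\mathcal{B}_f(\mathbb{R})$ is the $\sigma$-algebra generated by $\tau_f$. *)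

(* Defs.v *)
From Stdlib Require Import Reals List.
Open Scope R_scope.

(* A two-point selection: f {r,s} is encoded as f r s (only values with r <> s
   matter); it must not depend on the order of r,s and must pick r or s. *)
Definition two_point_selection (f : R -> R -> R) : Prop :=
  forall r s : R, r <> s -> f r s = f s r /\ (f r s = r \/ f r s = s).

Definition sel_lt (f : R -> R -> R) (r s : R) : Prop := r <> s /\ f r s = r.

Definition subbase (f : R -> R -> R) (S : R -> Prop) : Prop :=
  exists r : R, S = (fun x => sel_lt f x r) \/ S = (fun x => sel_lt f r x).

(* tau_f: the topology generated by the subbase; U is open iff every point of U
   lies in a finite intersection of subbase sets contained in U (the empty
   intersection being the whole line). *)
Definition tau (f : R -> R -> R) (U : R -> Prop) : Prop :=
  forall x : R, U x ->
    exists l : list (R -> Prop),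
      (forall S, In S l -> subbase f S) /\
      (forall S, In S l -> S x) /\
      (forall y : R, (forall S, In S l -> S y) -> U y).

Definition sigma_algebra (M : (R -> Prop) -> Prop) : Prop :=
  M (fun _ => True) /\
  (forall A, M A -> M (fun x => ~ A x)) /\
  (forall A : nat -> R -> Prop, (forall n, M (A n)) -> M (fun x => exists n, A n x)).

Definition Borel_f (f : R -> R -> R) (A : R -> Prop) : Prop :=
  forall M : (R -> Prop) -> Prop,
    sigma_algebra M -> (forall U, tau f U -> M U) -> M A.

Definition countable_set (A : R -> Prop) : Prop :=
  exists g : R -> nat, forall x y, A x -> A y -> g x = g y -> x = y.

Definition cocountable_family (A : R -> Prop) : Prop :=
  countable_set A \/ countable_set (fun x => ~ A x).

(* Main.v *)
Require Import Defs.
From Stdlib Require Import Reals Lra Lia Classical List.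
From mathcomp Require all_boot all_order all_algebra all_classical all_reals all_analysis Rstruct.

Module MC.
Import all_boot all_order all_algebra all_classical all_reals all_analysis Rstruct.
Import Order.TTheory GRing.Theory Num.Theory.
Local Open Scope classical_set_scope.
Local Open Scope ring_scope.

Lemma R_not_countable : ~ countable [set: Rdefinitions.R].
Proof.
move=> cT.
have c01 : countable ([set` `[0, 1]%R] : set Rdefinitions.R).
  by apply: sub_countable cT; apply: subset_card_le.
have := countable_lebesgue_measure0 c01.
rewrite lebesgue_measure_itv /= lte_fin ltr01 oppr0 adde0.
by move=> /eqP; rewrite eqe oner_eq0.
Qed.

Lemma cs_mc (A : Rdefinitions.R -> Prop) : countable_set A <-> countable A.
Proof.
split.
  move=> [g Hg]; apply/countable_injP; exists g => x y.
  by rewrite !inE => Ax Ay; apply: Hg.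
move=> /countable_injP [g Hg]; exists g => x y Ax Ay.
by apply: Hg; rewrite inE.
Qed.

Lemma cs_bigcup_R (D : Rdefinitions.R -> Prop) (F : Rdefinitions.R -> Rdefinitions.R -> Prop) :
  countable_set D -> (forall i, D i -> countable_set (F i)) ->
  countable_set (fun x => exists i, D i /\ F i x).
Proof.
move=> /cs_mc cD cF; apply/cs_mc.
have : countable (\bigcup_(i in D) F i).
  by apply: bigcup_countable => // i Di; apply/cs_mc/cF.
apply: sub_countable; apply: subset_card_le => x [i [Di Fi]]; by exists i.
Qed.

Lemma cs_bigcup_nat (F : nat -> Rdefinitions.R -> Prop) :
  (forall n, countable_set (F n)) ->
  countable_set (fun x => exists n, F n x).
Proof.
move=> cF; apply/cs_mc.
have : countable (\bigcup_(i in [set: nat]) F i).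
  by apply: bigcup_countable => // i _; apply/cs_mc/cF.
apply: sub_countable; apply: subset_card_le => x [i Fi]; by exists i.
Qed.


Lemma zorn_plain (T : Type) (P : (T -> Prop) -> Prop) :
  (forall F : (T -> Prop) -> Prop, (forall X, F X -> P X) ->
     (forall X Y, F X -> F Y -> (forall x, X x -> Y x) \/ (forall x, Y x -> X x)) ->
     P (fun x => exists X, F X /\ X x)) ->
  exists A, P A /\ forall B, (forall x, A x -> B x) -> ~ (forall x, B x -> A x) -> ~ P B.
Proof.
move=> HP.
have [A [PA Amax]] := @Zorn_bigcup T P (fun F FP Ftot =>
  ltac:(have := HP F FP Ftot;
        have -> : (fun x => exists X, F X /\ X x) = \bigcup_(X in F) X;
        [by apply: funext => x; apply: propext; split => [[X [FX Xx]]|[X FX Xx]]; exists X|by []])).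
exists A; split => // B AB BA PB.
by apply: (Amax B) => //; split.
Qed.
End MC.

Lemma R_unc : ~ countable_set (fun _ : R => True).
Proof. intro H. apply MC.R_not_countable. apply MC.cs_mc. exact H. Qed.

Open Scope R_scope.

Lemma cs_sub (A B : R -> Prop) : (forall x, A x -> B x) -> countable_set B -> countable_set A.
Proof. intros h [g hg]. exists g. intros x y ax ay e. apply hg; auto. Qed.

Lemma cs_U2 (A B : R -> Prop) : countable_set A -> countable_set B -> countable_set (fun x => A x \/ B x).
Proof.
  intros ca cb.
  apply (cs_sub _ (fun x => exists n, (fun n x => match n with O => A x | S _ => B x end) n x)).
  - intros x [h|h]; [exists O|exists 1%nat]; exact h.
  - apply MC.cs_bigcup_nat. intros [|n]; auto.
Qed.

Lemma cs_single (c : R) : countable_set (fun x => x = c).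
Proof. exists (fun _ => O). intros x y hx hy _. congruence. Qed.

Lemma split_unc (A : R -> Prop) : ~ countable_set A ->
  exists A1, (forall x, A1 x -> A x) /\ ~ countable_set A1 /\
             ~ countable_set (fun x => A x /\ ~ A1 x).
Proof.
  intros HA. apply NNPP; intro Hno.
  assert (Hdich : forall x, countable_set (fun y => A y /\ y < x) \/
                            countable_set (fun y => A y /\ x < y)).
  { intro x. destruct (classic (countable_set (fun y => A y /\ y < x))) as [h|h]; [left; exact h|right].
    apply NNPP; intro h2. apply Hno. exists (fun y => A y /\ y < x).
    split; [tauto|split; [exact h|]].
    intro h3. apply h2. refine (cs_sub _ _ _ h3).
    intros y [Ay Hy]. split; [exact Ay|]. intros [_ H']. lra. }
  assert (Smono : forall x x', x' <= x -> countable_set (fun y => A y /\ y < x) ->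
                   countable_set (fun y => A y /\ y < x')).
  { intros x x' le h. apply (cs_sub _ _ (fun y hy => conj (proj1 hy) (Rlt_le_trans _ _ _ (proj2 hy) le)) h). }
  assert (Tmono : forall x x', x <= x' -> countable_set (fun y => A y /\ x < y) ->
                   countable_set (fun y => A y /\ x' < y)).
  { intros x x' le h. apply (cs_sub _ _ (fun y hy => conj (proj1 hy) (Rle_lt_trans _ _ _ le (proj2 hy))) h). }
  destruct (classic (forall n, countable_set (fun y => A y /\ y < INR n))) as [HS|HS].
  { apply HA. apply (cs_sub _ (fun y => exists n, (fun n y => A y /\ y < INR n) n y)).
    - intros y Ay. destruct (INR_unbounded y) as [n Hn]. exists n. split; auto.
    - apply MC.cs_bigcup_nat. exact HS. }
  destruct (classic (forall n, countable_set (fun y => A y /\ - INR n < y))) as [HT|HT].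
  { apply HA. apply (cs_sub _ (fun y => exists n, (fun n y => A y /\ - INR n < y) n y)).
    - intros y Ay. destruct (INR_unbounded (- y)) as [n Hn]. exists n. split; auto. lra.
    - apply MC.cs_bigcup_nat. exact HT. }
  apply not_all_ex_not in HS. apply not_all_ex_not in HT.
  destruct HS as [n Hn]. destruct HT as [m Hm].
  set (E := fun x => countable_set (fun y => A y /\ y < x)).
  assert (Hb : bound E).
  { exists (INR n). intros x Ex. destruct (Rle_lt_dec x (INR n)) as [h|h]; auto.
    exfalso. apply Hn. apply (Smono x); [lra|exact Ex]. }
  assert (Hne : exists x, E x).
  { exists (- INR m). destruct (Hdich (- INR m)); [assumption|contradiction]. }
  destruct (completeness E Hb Hne) as [c [Hub Hlub]].
  assert (Hpos : forall k, 0 < / INR (S k)).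
  { intro k. apply Rinv_0_lt_compat. apply lt_0_INR. lia. }
  assert (Hlow : forall k, countable_set (fun y => A y /\ y < c - / INR (S k))).
  { intro k. apply NNPP; intro hk.
    assert (c <= c - / INR (S k)).
    { apply Hlub. intros x Ex. destruct (Rle_lt_dec x (c - / INR (S k))) as [h|h]; auto.
      exfalso. apply hk. apply (Smono x); [lra|exact Ex]. }
    specialize (Hpos k). lra. }
  assert (Hhigh : forall k, countable_set (fun y => A y /\ c + / INR (S k) < y)).
  { intro k. destruct (Hdich (c + / INR (S k))) as [h|h]; auto.
    exfalso. assert (c + / INR (S k) <= c) by (apply Hub; exact h).
    specialize (Hpos k). lra. }
  apply HA.
  apply (cs_sub A (fun y => (exists k, (fun k y => A y /\ y < c - / INR (S k)) k y) \/
                            ((exists k, (fun k y => A y /\ c + / INR (S k) < y) k y) \/ y = c))).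
  - intros y Ay. destruct (Rtotal_order y c) as [h|[h|h]].
    + left. destruct (archimed_cor1 (c - y)) as [N [HN1 HN2]]; [lra|].
      destruct N as [|N]; [lia|]. exists N. split; auto. lra.
    + right; right; auto.
    + right; left. destruct (archimed_cor1 (y - c)) as [N [HN1 HN2]]; [lra|].
      destruct N as [|N]; [lia|]. exists N. split; auto. lra.
  - apply cs_U2; [apply MC.cs_bigcup_nat; exact Hlow|].
    apply cs_U2; [apply MC.cs_bigcup_nat; exact Hhigh|apply cs_single].
Qed.

Definition good (lt : R -> R -> Prop) (L : R -> Prop) (F : R * (R * R) -> Prop) :=
  forall p q, F p -> F q ->
    L (fst p) /\ L (fst (snd p)) /\ lt (fst (snd p)) (fst p) /\ lt (fst p) (snd (snd p)) /\
    (lt (fst (snd p)) (fst q) -> lt (fst q) (snd (snd p)) -> fst q = fst p) /\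
    (fst p = fst q -> p = q).

Lemma core (lt : R -> R -> Prop)
  (Hasym : forall x y, lt x y -> lt y x -> False)
  (Htot : forall x y, x <> y -> lt x y \/ lt y x)
  (Hopen : forall V : R -> Prop,
     (forall x, V x -> exists s t, lt s x /\ lt x t /\ forall y, lt s y -> lt y t -> V y) ->
     countable_set V \/ countable_set (fun x => ~ V x))
  (HL : ~ countable_set (fun r => countable_set (fun x => lt r x))) : False.
Proof.
  set (L := fun r => countable_set (fun x => lt r x)) in *.
  assert (HD : forall b, L b -> countable_set (fun x => ~ lt x b)).
  { intros b Lb. apply (cs_sub _ (fun x => lt b x \/ x = b)).
    - intros x hx. destruct (Req_dec x b) as [e|ne]; [right; auto|left].
      destruct (Htot x b ne); tauto.
    - apply cs_U2; [exact Lb|apply cs_single]. }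
  destruct (MC.zorn_plain (R * (R * R)) (good lt L)) as [F [GF Fmax]].
  { intros Fam Hall Htotal p q [X [FX Xp]] [Y [FY Yq]].
    destruct (Htotal X Y FX FY) as [h|h].
    - apply (Hall Y FY); auto.
    - apply (Hall X FX); auto. }
  set (A := fun x => exists p, F p /\ fst p = x).
  assert (HAunc : ~ countable_set A).
  { intro cA.
    set (C := fun x => exists p, F p /\ lt (fst (snd p)) x /\ lt x (snd (snd p))).
    assert (cC : countable_set C).
    { apply (cs_sub _ (fun x => exists a, A a /\
               (fun a x => exists p, F p /\ fst p = a /\ lt (fst (snd p)) x) a x)).
      - intros x [p [Fp [h1 h2]]]. exists (fst p). split.
        + exists p; auto.
        + exists p; auto.
      - apply MC.cs_bigcup_R; [exact cA|]. intros a [p [Fp ep]].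
        apply (cs_sub _ (fun x => lt (fst (snd p)) x)).
        + intros x [q [Fq [eq hq]]].
          assert (q = p).
          { destruct (GF q p Fq Fp) as [_ [_ [_ [_ [_ H]]]]]. apply H. congruence. }
          subst q. exact hq.
        + destruct (GF p p Fp Fp) as [_ [Ls _]]. exact Ls. }
    assert (cB : countable_set (fun x => exists b, A b /\ (fun b x => ~ lt x b) b x)).
    { apply MC.cs_bigcup_R; [exact cA|]. intros b [p [Fp ep]]. apply HD. subst b.
      destruct (GF p p Fp Fp); tauto. }
    assert (HAC : forall x, A x -> C x).
    { intros x [p [Fp ep]]. subst x. exists p.
      destruct (GF p p Fp Fp) as [_ [_ [h1 [h2 _]]]]. auto. }
    destruct (classic (exists t, L t /\ ~ exists b, A b /\ ~ lt t b)) as [[t [Lt Ht]]|Hno].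
    2: { apply HL. apply (cs_sub _ _ (fun x Lx => NNPP _ (fun hx => Hno (ex_intro _ x (conj Lx hx)))) cB). }
    assert (Ht' : forall b, A b -> lt t b).
    { intros b Ab. apply NNPP; intro h. apply Ht. exists b; auto. }
    destruct (classic (exists a, L a /\ lt a t /\ ~ C a)) as [[a [La [Hat HCa]]]|Hno].
    2: { apply HL. apply (cs_sub _ (fun x => ~ lt x t \/ C x)).
         - intros x Lx. destruct (classic (lt x t)) as [h|h]; [right|left; auto].
           apply NNPP; intro h'. apply Hno. exists x; auto.
         - apply cs_U2; [apply HD; exact Lt|exact cC]. }
    destruct (classic (exists s, L s /\ lt s a)) as [[s [Ls Hsa]]|Hno].
    2: { apply HL. apply (cs_sub _ (fun x => ~ lt x a)).
         - intros x Lx hx. apply Hno; eauto.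
         - apply HD; exact La. }
    pose (p0 := (a, (s, t))).
    apply (Fmax (fun p => F p \/ p = p0)).
    - intros x hx; left; exact hx.
    - intro h. apply HCa; apply HAC; exists p0; split; [apply h; right; reflexivity|reflexivity].
    - intros p q hp hq. destruct hp as [Fp|ep]; destruct hq as [Fq|eq].
      + apply GF; auto.
      + subst q. destruct (GF p p Fp Fp) as [h1 [h2 [h3 [h4 _]]]]. simpl.
        repeat split; auto.
        * intros h5 h6. exfalso. apply HCa. exists p. auto.
        * intro e. exfalso. apply HCa. rewrite <- e. apply HAC. exists p; auto.
      + subst p. simpl. repeat split; auto.
        * intros h5 h6. exfalso. apply (Hasym (fst q) t h6). apply Ht'. exists q; auto.
        * intro e. exfalso. apply HCa. rewrite e. apply HAC. exists q; auto.
      + subst; simpl; repeat split; auto. }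
  destruct (split_unc A HAunc) as [A1 [HA1A [HA1 HA2]]].
  set (V := fun x => exists p, F p /\ A1 (fst p) /\ lt (fst (snd p)) x /\ lt x (snd (snd p))).
  destruct (Hopen V) as [cV|cV].
  - intros x [p [Fp [h1 [h2 h3]]]]. exists (fst (snd p)), (snd (snd p)).
    split; auto. split; auto. intros y hy1 hy2. exists p; auto.
  - apply HA1. apply (cs_sub _ V); auto. intros x hx.
    destruct (HA1A x hx) as [p [Fp ep]]. exists p. subst x.
    destruct (GF p p Fp Fp) as [_ [_ [h3 [h4 _]]]]. auto.
  - apply HA2. apply (cs_sub _ (fun x => ~ V x)); auto.
    intros x [Ax nA1x] [p [Fp [h1 [h2 h3]]]]. destruct Ax as [q [Fq eq]]. subst x.
    destruct (GF p q Fp Fq) as [_ [_ [_ [_ [h5 _]]]]].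
    apply nA1x. rewrite (h5 h2 h3). exact h1.
Qed.

Theorem theorem3p8 :
  forall f : R -> R -> R, two_point_selection f ->
    ~ (forall A : R -> Prop, cocountable_family A <-> Borel_f f A).
Proof.
  intros f Hf H.
  assert (Hco : forall U, tau f U -> countable_set U \/ countable_set (fun x => ~ U x)).
  { intros U hU. apply (proj2 (H U)). intros M _ HM. apply HM; exact hU. }
  assert (Hasym : forall x y, sel_lt f x y -> sel_lt f y x -> False).
  { intros x y [n1 e1] [n2 e2]. destruct (Hf x y n1) as [e _]. apply n1. congruence. }
  assert (Htot : forall x y, x <> y -> sel_lt f x y \/ sel_lt f y x).
  { intros x y n. destruct (Hf x y n) as [e [h|h]].
    - left; split; auto.
    - right; split; [auto|congruence]. }
  assert (Hopen : forall V : R -> Prop,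
     (forall x, V x -> exists s t, sel_lt f s x /\ sel_lt f x t /\
        forall y, sel_lt f s y -> sel_lt f y t -> V y) ->
     countable_set V \/ countable_set (fun x => ~ V x)).
  { intros V hV. apply Hco. intros x Vx. destruct (hV x Vx) as [s [t [h1 [h2 h3]]]].
    exists ((fun y => sel_lt f s y) :: (fun y => sel_lt f y t) :: nil).
    split; [|split].
    - intros S [e|[e|[]]]; subst S.
      + exists s; right; reflexivity.
      + exists t; left; reflexivity.
    - intros S [e|[e|[]]]; subst S; auto.
    - intros y hy. apply h3; apply hy; simpl; auto. }
  assert (HLU : forall r, countable_set (fun x => sel_lt f r x) \/
                          countable_set (fun x => sel_lt f x r)).
  { intro r. destruct (Hco (fun x => sel_lt f r x)) as [h|h].
    - intros x hx. exists ((fun y => sel_lt f r y) :: nil). split; [|split].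
      + intros S [e|[]]; subst S. exists r; right; reflexivity.
      + intros S [e|[]]; subst S; auto.
      + intros y hy. apply hy; simpl; auto.
    - left; exact h.
    - right. apply (cs_sub _ _ (fun x hx hx' => Hasym _ _ hx hx') h). }
  destruct (classic (countable_set (fun r => countable_set (fun x => sel_lt f r x)))) as [cL|uL].
  - destruct (classic (countable_set (fun r => countable_set (fun x => sel_lt f x r)))) as [cU|uU].
    + apply R_unc. apply (cs_sub _ _ (fun r _ => HLU r)). apply cs_U2; assumption.
    + apply (core (fun a b => sel_lt f b a)).
      * intros x y h1 h2. exact (Hasym _ _ h1 h2).
      * intros x y n. destruct (Htot x y n); auto.
      * intros V hV. apply Hopen. intros x Vx. destruct (hV x Vx) as [s [t [h1 [h2 h3]]]].
        exists t, s. refine (conj h2 (conj h1 _)). intros y hy1 hy2. apply h3; assumption.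
      * exact uU.
  - exact (core (sel_lt f) Hasym Htot Hopen uL).
Qed.
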